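(* Let $m\ge2$, $n\ge2$ and $\mathcal{I}\subseteq\mathbb{R}^{m\times n}$ any set of instances of the goods allocation problem. An allocation function $A$ over $\mathcal{I}$ is proportionable (in the goods sense) if and only if for every $v\in\mathcal{I}$, $\sum_{i\in[m]}v_i(A(v)_i)\ge\frac1m\sum_{i\in[m]}v_i([n])$.
   Context: Goods allocation: $m$ agents $[m]$, $n$ goods $[n]$; an instance is a matrix $v$ with $v_{i,j}$ the value of agent $i$ for good $j$, and $v_i(S)=\sum_{j\in S}v_{i,j}$. An allocation is a tuple $(A_1,\dots,A_m)$ of pairwise disjoint subsets of $[n]$ with union $[n]$. A mechanism $(A,q)$ over $\mathcal{I}$ assigns to each $v$ an allocation $A(v)$ and transfers $q(v)\in\mathbb{R}^m$; agent $i$'s utility is $v_i(A_i)-q_i$. It is proportional if for every $v\in\mathcal{I}$ and $i\in[m]$: $v_i(A_i)-q_i\ge\frac1m\sum_{j\in[m]}(v_i(A_j)-q_j)$. An allocation function $A$ is proportionable if some transfer function $q$ makes $(A,q)$ proportional. *)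

(* Defs.v *)
From mathcomp Require Import all_boot all_order all_algebra.
Set Implicit Arguments. Unset Strict Implicit. Unset Printing Implicit Defensive.
Import Order.TTheory GRing.Theory Num.Theory.
Local Open Scope ring_scope.

Section Defs.
Variables (R : realFieldType) (m n : nat).

(* An instance: value matrix, v i j = value of agent i for good j. *)
Definition instance := 'M[R]_(m, n).

Definition valu (v : instance) (i : 'I_m) (S : {set 'I_n}) : R :=
  \sum_(j in S) v i j.

Definition allocation := {ffun 'I_m -> {set 'I_n}}.

Definition is_allocation (Al : allocation) : Prop :=
  (forall i k : 'I_m, i != k -> [disjoint Al i & Al k]) /\
  (\bigcup_(i < m) Al i = [set: 'I_n]).

Definition proportional (I : instance -> Prop) (A : instance -> allocation)
    (q : instance -> 'I_m -> R) : Prop :=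
  forall v, I v -> forall i : 'I_m,
    valu v i (A v i) - q v i >=
      m%:R^-1 * \sum_(j < m) (valu v i (A v j) - q v j).

Definition proportionable (I : instance -> Prop) (A : instance -> allocation) : Prop :=
  exists q : instance -> 'I_m -> R, proportional I A q.

End Defs.

(* Main.v *)
Require Import Defs.
From mathcomp Require Import all_boot all_order all_algebra.
From mathcomp Require Import ring lra.
Import Order.TTheory GRing.Theory Num.Theory.
Local Open Scope ring_scope.

Lemma part_sum (R : realFieldType) (m n : nat) (v : instance R m n)
  (Al : allocation m n) (i : 'I_m) : is_allocation Al ->
  \sum_(j < m) valu v i (Al j) = valu v i [set: 'I_n].
Proof.
move=> [dis cov]; rewrite /valu -cov.
by rewrite (partition_disjoint_bigcup _ (fun k => v i k) dis).
Qed.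

Theorem mainTheorem7 (R : realFieldType) (m n : nat) (hm : (2 <= m)%N) (hn : (2 <= n)%N)
    (I : instance R m n -> Prop) (A : instance R m n -> allocation m n)
    (hA : forall v, I v -> is_allocation (A v)) :
  proportionable I A <->
  (forall v, I v ->
     \sum_(i < m) valu v i (A v i) >= m%:R^-1 * \sum_(i < m) valu v i [set: 'I_n]).
Proof.
have mpos : (0 : R) < m%:R by rewrite ltr0n; apply: leq_trans hm.
have mne : (m%:R : R) != 0 by rewrite gt_eqF.
split.
- move=> [q Hq] v Iv.
  have S := @ler_sum _ _ (index_enum 'I_m) xpredT _ _ (fun i _ => Hq v Iv i).
  set Q := \sum_(j < m) q v j in S.
  have E1 : \sum_(i < m) m%:R^-1 * \sum_(j < m) (valu v i (A v j) - q v j)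
      = m%:R^-1 * \sum_(i < m) valu v i [set: 'I_n] - Q.
    rewrite -big_distrr /=; under eq_bigr do rewrite sumrB (@part_sum _ _ _ v _ _ (hA v Iv)).
    rewrite sumrB sumr_const card_ord -/Q mulrBr -[Q *+ m]mulr_natr.
    by rewrite mulrCA mulVf // mulr1.
  have E2 : \sum_(i < m) (valu v i (A v i) - q v i)
      = \sum_(i < m) valu v i (A v i) - Q by rewrite sumrB.
  rewrite E1 E2 in S; lra.
- move=> H.
  exists (fun v i => valu v i (A v i) - m%:R^-1 * \sum_(j < m) valu v i (A v j)).
  move=> v Iv i.
  have Hv := H v Iv.
  have P := fun j => @part_sum _ _ _ v _ j (hA v Iv).
  set L := \sum_(i < m) valu v i (A v i) in Hv *.
  set T := \sum_(i < m) valu v i [set: 'I_n] in Hv *.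
  have K : \sum_(j < m) (valu v i (A v j) - (valu v j (A v j) - m%:R^-1 * \sum_(k < m) valu v j (A v k)))
      = valu v i [set: 'I_n] - L + m%:R^-1 * T.
    rewrite !sumrB P -/L; under eq_bigr do rewrite P.
    rewrite -big_distrr -/T /=; ring.
  rewrite K P.
  set x := valu v i [set: 'I_n].
  have -> : valu v i (A v i) - (valu v i (A v i) - m%:R^-1 * x) = m%:R^-1 * x by ring.
  rewrite ler_pM2l ?invr_gt0 //.
  lra.
Qed.
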